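(* For any parent selection mechanism (applied to the set of points of maximum $\mathrm{L}$-value), the expected time for the modified GSEMO on \textsc{LOTZ} to reach the Pareto front (i.e. to have a Pareto-optimal point in its population) is $O(n^2)$.
   Context: Search space $\{0,1\}^n$; objectives maximised. $\textsc{LOTZ}(x)=(\mathrm{LO}(x),\mathrm{TZ}(x))$, $\mathrm{LO}$ = number of leading ones, $\mathrm{TZ}$ = number of trailing zeros. Dominance: $y$ dominates $x$ if $f_i(y)\ge f_i(x)$ for all $i$, strictly for some $i$; weakly dominates if $\ge$ in all. Pareto set $\{1^i0^{n-i}:0\le i\le n\}$. Modified GSEMO: let $\mathrm{L}(x)=\mathrm{LO}(x)+\mathrm{TZ}(x)$. Start with uniform random $s$, $P=\{s\}$. Each iteration: let $P'\subseteq P$ be the points with maximum $\mathrm{L}$-value; choose a parent $s\in P'$ by the parent selection mechanism (with any diversity scores computed w.r.t. $P'$); create $s'$ by flipping each bit independently with probability $1/n$; if $s'$ is not dominated by any member of $P$, add it and remove all members of $P$ weakly dominated by $s'$. Time = number of iterations. *)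

(* Defs.v *)
From HB Require Import structures.
From mathcomp Require Import all_boot all_order all_algebra.
From mathcomp Require Import all_classical all_reals all_analysis.
Set Implicit Arguments. Unset Strict Implicit. Unset Printing Implicit Defensive.
Import Order.TTheory GRing.Theory Num.Theory.
Local Open Scope ring_scope.

(* Bit strings of length n: x i is the bit at position i+1. *)
Definition bits (n : nat) := {ffun 'I_n -> bool}.

Section GSEMO.
Variable n : nat.
Local Notation B := (bits n).

Definition LO (x : B) : nat :=
  #|[set i : 'I_n | [forall j : 'I_n, (j <= i)%N ==> x j]]|.
Definition TZ (x : B) : nat :=
  #|[set i : 'I_n | [forall j : 'I_n, (i <= j)%N ==> ~~ x j]]|.

(* LOTZ(x) = (LO x, TZ x), both maximised *)
Definition weakly_dominates (y x : B) : bool :=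
  (LO x <= LO y)%N && (TZ x <= TZ y)%N.
Definition dominates (y x : B) : bool :=
  weakly_dominates y x && ((LO x < LO y)%N || (TZ x < TZ y)%N).

Definition pareto_optimal (x : B) : bool := [forall y : B, ~~ dominates y x].

Definition Lval (x : B) : nat := (LO x + TZ x)%N.

Definition maxL_set (P : {set B}) : {set B} :=
  [set x in P | Lval x == \max_(z in P) Lval z].

Definition update (P : {set B}) (y : B) : {set B} :=
  if [exists z in P, dominates z y] then P
  else y |: [set z in P | ~~ weakly_dominates y z].

Definition hamming (x y : B) : nat := #|[set i : 'I_n | x i != y i]|.

Variable R : realType.

(* standard bit mutation: flip each bit independently with prob. 1/n *)
Definition mut_prob (x y : B) : R :=
  (n%:R^-1) ^+ hamming x y * (1 - n%:R^-1) ^+ (n - hamming x y).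

Definition selection_mechanism (sel : nat -> {set B} -> B -> R) : Prop :=
  forall t (P : {set B}), P != finset.set0 ->
    [/\ forall x, 0 <= sel t P x,
        forall x, x \notin maxL_set P -> sel t P x = 0
      & \sum_(x in maxL_set P) sel t P x = 1].

Definition trans (sel : nat -> {set B} -> B -> R) (t : nat)
    (P Q : {set B}) : R :=
  \sum_(s in maxL_set P) sel t P s *
    \sum_(y : B) mut_prob s y * (update P y == Q)%:R.

Definition has_pareto (P : {set B}) : bool := [exists x in P, pareto_optimal x].

(* survival sub-distribution: q t P = Pr[population after t iterations is P
   and no population at iterations 0..t contained a Pareto-optimal point] *)
Fixpoint surv (sel : nat -> {set B} -> B -> R) (t : nat) (Q : {set B}) : R :=
  match t with
  | 0 => (~~ has_pareto Q)%:R *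
         \sum_(s : B) (2 ^ n)%:R^-1 * (Q == [set s])%:R
  | t'.+1 => (~~ has_pareto Q)%:R *
         \sum_(P : {set B}) surv sel t' P * trans sel t' P Q
  end.

(* Pr[T > t], T = first iteration at which the population has a
   Pareto-optimal point *)
Definition tail_prob (sel : nat -> {set B} -> B -> R) (t : nat) : R :=
  \sum_(Q : {set B}) surv sel t Q.

(* E[T] = sum_{t >= 0} Pr[T > t]  (in the extended reals; +oo if infinite) *)
Definition expected_time (sel : nat -> {set B} -> B -> R) : \bar R :=
  (\sum_(0 <= t <oo) (tail_prob sel t)%:E)%E.

End GSEMO.

(* Main.v *)
Require Import Defs.
From HB Require Import structures.
From mathcomp Require Import all_boot all_order all_algebra.
From mathcomp Require Import all_classical all_reals all_analysis.
From mathcomp Require Import zify ring lra.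
Import Order.TTheory GRing.Theory Num.Theory.
Local Open Scope ring_scope.
Set Implicit Arguments.

Lemma LO_TZ_le (n : nat) (x : bits n) : (LO x + TZ x <= n)%N.
Proof.
rewrite /LO /TZ -cardsUI.
have -> : [set i : 'I_n | [forall j : 'I_n, (j <= i)%N ==> x j]] :&:
          [set i : 'I_n | [forall j : 'I_n, (i <= j)%N ==> ~~ x j]] = finset.set0.
  apply/setP => i; rewrite !inE; apply/negP => /andP[/forallP h1 /forallP h2].
  by move: (h1 i) (h2 i); rewrite leqnn /= => ->.
by rewrite cards0 addn0; apply: leq_trans (max_card _) _; rewrite card_ord.
Qed.

Lemma pareto_of_L (n : nat) (x : bits n) : (n <= Lval x)%N -> pareto_optimal x.
Proof.
move=> hx; apply/forallP => y; apply/negP.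
rewrite /dominates /weakly_dominates => /andP[/andP[h1 h2] h3].
have := LO_TZ_le y; move: hx h3; rewrite /Lval => hx /orP[] h3; lia.
Qed.

Lemma flip_exists (n : nat) (s : bits n) : (Lval s < n)%N ->
  exists y : bits n, hamming s y = 1%N /\ (Lval s < Lval y)%N.
Proof.
move=> hs.
set A := [set i : 'I_n | [forall j : 'I_n, (j <= i)%N ==> s j]].
set B := [set i : 'I_n | [forall j : 'I_n, (i <= j)%N ==> ~~ s j]].
have hAB : (#|A| + #|B| < n)%N by [].
have [k0 k0A] : exists k0, k0 \notin A.
  apply/existsP; rewrite -negb_forall; apply/negP => /forallP hall.
  have : A = [set: 'I_n] by apply/setP => i; rewrite finset.in_setT; exact: hall.
  move=> hA; move: hAB; rewrite hA cardsT card_ord; lia.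
case: (arg_minnP (P := fun i : 'I_n => i \notin A) val k0A) => k kA kmin.
have hjA : forall j : 'I_n, (j < k)%N -> j \in A.
  move=> j hj; apply/negPn/negP => /kmin; by rewrite leqNgt hj.
have hsj : forall j : 'I_n, (j < k)%N -> s j.
  by move=> j /hjA; rewrite inE => /forallP /(_ j); rewrite leqnn.
have sk : s k = false.
  move: kA; rewrite inE negb_forall => /existsP [j]; rewrite negb_imply => /andP[hj hsj'].
  case: (ltnP j k) => hjk.
    by move: hsj'; rewrite hsj.
  have ejk : j = k by apply: val_inj; apply/eqP; rewrite eqn_leq hj hjk.
  by move: hsj'; rewrite ejk; case: (s k).
have kB : k \notin B.
  apply/negP => hkB.
  have : A :|: B = [set: 'I_n].
    apply/setP => i; rewrite !inE; case: (ltnP i k) => hik.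
      by have := hjA i hik; rewrite inE => ->.
    apply/orP; right; apply/forallP => j; apply/implyP => hij.
    by move: hkB; rewrite inE => /forallP /(_ j); rewrite (leq_trans hik hij).
  move=> hU; have := leq_card_setU A B; rewrite hU cardsT card_ord; move=> [h _]; lia.
pose y : bits n := [ffun i => (i == k) || s i].
exists y; split.
  rewrite /hamming.
  have -> : [set i : 'I_n | s i != y i] = [set k].
    apply/setP => i; rewrite !inE ffunE; have [->|hik] := eqVneq i k.
      by rewrite sk.
    by rewrite /= eqxx.
  by rewrite cards1.
have hLO : (#|A|.+1 <= LO y)%N.
  have <- : ((k \notin A) + #|A|)%N = #|A|.+1 by rewrite kA.
  rewrite /LO -(cardsU1 k A).
  apply: subset_leq_card; apply/fintype.subsetP => i; rewrite !inE => /orP[/eqP ->|].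
    apply/forallP => j; apply/implyP => hj; rewrite ffunE.
    case: (ltnP j k) => hjk.
      by rewrite hsj ?orbT.
    have ejk : j = k by apply: val_inj; apply/eqP; rewrite eqn_leq hj hjk.
    by rewrite ejk eqxx.
  move=> /forallP hi; apply/forallP => j; apply/implyP => hj; rewrite ffunE.
  by rewrite (implyP (hi j) hj) orbT.
have hTZ : (#|B| <= TZ y)%N.
  apply: subset_leq_card; apply/fintype.subsetP => i; rewrite !inE => /forallP hi.
  apply/forallP => j; apply/implyP => hj; rewrite ffunE.
  case: eqP => [hjk|_] /=; last exact: (implyP (hi j) hj).
  exfalso; move: kB; rewrite inE; apply/negP/negPn/forallP => l.
  apply/implyP => hl; apply: (implyP (hi l)); rewrite -hjk in hl; lia.
rewrite /Lval; move: hLO hTZ; rewrite /LO /TZ -/A -/B; lia.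
Qed.

Lemma mut_prod (R : realType) (n : nat) (s y : bits n) :
  mut_prob R s y = \prod_(i < n) (if s i != y i then n%:R^-1 else 1 - n%:R^-1).
Proof.
rewrite /mut_prob /hamming.
set S := [set i : 'I_n | s i != y i].
rewrite (bigID (fun i => i \in S)) /=.
have -> : \prod_(i < n | i \in S) (if s i != y i then n%:R^-1 else 1 - n%:R^-1)
          = \prod_(i in S) (n%:R^-1 : R).
  by apply: eq_bigr => i; rewrite inE; case: (s i != y i).
have -> : \prod_(i < n | i \notin S) (if s i != y i then n%:R^-1 else 1 - n%:R^-1)
          = \prod_(i in ~: S) (1 - n%:R^-1 : R).
  apply: eq_big => i; rewrite !inE //.
  by move=> /negbTE ->.
rewrite !prodr_const.
have h := cardsC S; rewrite card_ord in h.
by have -> : (n - #|S| = #|~: S|)%N by lia.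
Qed.

Lemma mut_sum (R : realType) (n : nat) (s : bits n) :
  \sum_(y : bits n) mut_prob R s y = 1.
Proof.
under eq_bigr do rewrite mut_prod.
pose F := fun (i : 'I_n) (b : bool) => (if s i != b then n%:R^-1 else 1 - n%:R^-1 : R).
have := bigA_distr_bigA F.
rewrite /F => <-.
apply: big1 => i _; rewrite big_bool /=.
by case: (s i) => /=; lra.
Qed.

Lemma mut_ge0 (R : realType) (n : nat) (s y : bits n) : (0 < n)%N ->
  0 <= mut_prob R s y.
Proof.
move=> n0; rewrite /mut_prob; apply: mulr_ge0; apply: exprn_ge0.
  by rewrite invr_ge0.
rewrite subr_ge0 invf_le1 // ?ler1n ?ltr0n //.
Qed.

Lemma mut_flip (R : realType) (n : nat) (s y : bits n) : (2 <= n)%N ->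
  hamming s y = 1%N -> expR (-1) / n%:R <= mut_prob R s y.
Proof.
case: n s y => [|[|m]] // s y _ h1.
rewrite /mut_prob h1 expr1 subSS subn0 [X in X <= _]mulrC; apply: ler_wpM2l; first by rewrite invr_ge0 ler0n.
set a : R := (m.+1)%:R.
have a0 : 0 < a by rewrite ltr0n.
have ha : (m.+2)%:R = a + 1 :> R by rewrite /a -natr1.
have e1 : expR (- a^-1) <= 1 - (m.+2)%:R^-1.
  rewrite expRN ha.
  have hx := expR_ge1Dx (a^-1).
  have -> : 1 - (a + 1)^-1 = (1 + a^-1)^-1.
    field; have hm := ler0n R m; apply/andP; split; apply: lt0r_neq0; lra.
  rewrite lef_pV2 ?posrE ?expR_gt0 //; have ha0 : 0 < a^-1 by rewrite invr_gt0.
  by rewrite addr_gt0.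
have -> : expR (-1) = expR (- a^-1) ^+ m.+1.
  by rewrite -expRM_natl -/a mulrN mulfV // gt_eqF.
apply: lerXn2r => //; rewrite ?nnegrE ?expR_ge0 //.
by apply: le_trans e1; rewrite expR_ge0.
Qed.

Definition MM (n : nat) (P : {set bits n}) : nat := \max_(z in P) Lval z.

Lemma MM_le (n : nat) (P : {set bits n}) : (MM P <= n)%N.
Proof. by apply/bigmax_leqP => z _; exact: LO_TZ_le. Qed.

Lemma MM_ge (n : nat) (P : {set bits n}) z : z \in P -> (Lval z <= MM P)%N.
Proof. by move=> zP; apply: (leq_bigmax_cond (F := fun z => Lval z)). Qed.

Lemma MM_update (n : nat) (P : {set bits n}) y : (MM P <= MM (update P y))%N.
Proof.
rewrite /update; case: ifP => // hd.
apply/bigmax_leqP => z zP.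
case: (boolP (weakly_dominates y z)) => hw.
  apply: leq_trans (MM_ge (setU11 _ _)).
  by move: hw; rewrite /weakly_dominates /Lval => /andP[h1 h2]; lia.
by apply: MM_ge; rewrite !inE zP hw orbT.
Qed.

Lemma MM_update_gt (n : nat) (P : {set bits n}) y :
  (forall z, z \in P -> (Lval z < Lval y)%N) -> (Lval y <= MM (update P y))%N.
Proof.
move=> hz; rewrite /update; case: ifP => [/existsP [z /andP [zP hd]]|_].
  have := hz z zP; move: hd; rewrite /dominates /weakly_dominates /Lval.
  by move=> /andP[/andP[h1 h2] _]; lia.
exact: MM_ge (setU11 _ _).
Qed.

Lemma maxL_in (n : nat) (P : {set bits n}) s :
  s \in maxL_set P -> s \in P /\ Lval s = MM P.
Proof. by rewrite inE => /andP[sP /eqP ->]. Qed.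

Definition Vf (R : realType) (n : nat) (P : {set bits n}) : R :=
  (n%:R * expR 1) * (n - MM P)%:R.

Lemma Vf_ge0 (R : realType) (n : nat) (P : {set bits n}) : 0 <= Vf R P.
Proof. by rewrite /Vf !mulr_ge0 ?ler0n ?expR_ge0. Qed.

Lemma Vf_le (R : realType) (n : nat) (P : {set bits n}) :
  Vf R P <= n%:R * expR 1 * n%:R.
Proof.
rewrite /Vf ler_wpM2l ?mulr_ge0 ?ler0n ?expR_ge0 // ler_nat; lia.
Qed.

Lemma inner (R : realType) (n : nat) (P : {set bits n}) s :
  (2 <= n)%N -> ~~ has_pareto P -> s \in maxL_set P ->
  \sum_(y : bits n) mut_prob R s y * Vf R (update P y) <= Vf R P - 1.
Proof.
move=> n2 hnp hs.
have [sP hsM] := maxL_in hs.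
have hsn : (Lval s < n)%N.
  rewrite ltnNge; apply/negP => /pareto_of_L hpo; move/negP: hnp; apply.
  by apply/existsP; exists s; rewrite sP hpo.
have [ys [hy1 hyL]] := flip_exists s hsn.
set c : R := n%:R * expR 1.
have c0 : 0 <= c by rewrite /c mulr_ge0 ?ler0n ?expR_ge0.
have hV : forall y, Vf R (update P y) <= Vf R P - c * (y == ys)%:R.
  move=> y; rewrite /Vf -/c.
  have key : ((n - MM (update P y)) + (y == ys) <= n - MM P)%N.
    case: eqP => [->|_].
      have hz : forall z, z \in P -> (Lval z < Lval ys)%N.
        by move=> z zP; apply: leq_ltn_trans (MM_ge zP) _; rewrite -hsM.
      have := MM_update_gt ys hz; lia.
    have := MM_update P y; lia.
  have key' : ((n - MM (update P y))%:R + (y == ys)%:R <= (n - MM P)%:R :> R).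
    by rewrite -natrD ler_nat.
  nra.
apply: le_trans (ler_sum _ (fun y _ => ler_wpM2l (mut_ge0 R s y (ltnW n2)) (hV y))) _.
under eq_bigr do rewrite mulrBr.
rewrite sumrB -mulr_suml mut_sum mul1r.
rewrite (bigD1 ys) //= eqxx big1 ?addr0; last first.
  by move=> y /negbTE ->; rewrite mulr0 mulr0.
have hm := mut_flip R n2 hy1.
have : 1 <= c * mut_prob R s ys.
  apply: le_trans (ler_wpM2l c0 hm).
  rewrite /c expRN.
  have n0 : (n%:R : R) != 0 by rewrite pnatr_eq0; lia.
  have e0 : expR 1 != 0 :> R by rewrite gt_eqF ?expR_gt0.
  rewrite [X in _ <= X](_ : _ = 1) //; field; by rewrite n0 e0.
move=> h; rewrite mulr1; lra.
Qed.

Lemma series_le (R : realType) (u : nat -> R) (B : R) :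
  (forall t, 0 <= u t) -> (forall N, \sum_(0 <= t < N) u t <= B) ->
  (\sum_(0 <= t <oo) (u t)%:E <= B%:E)%E.
Proof.
move=> u0 uB; apply: lime_le.
  by apply: is_cvg_nneseries => t _ _; rewrite lee_fin.
by apply: nearW => N; rewrite sumEFin lee_fin.
Qed.

Lemma trans_exp (R : realType) (n : nat) (sel : nat -> {set bits n} -> bits n -> R)
  t (P : {set bits n}) (F : {set bits n} -> R) :
  \sum_Q trans sel t P Q * F Q =
  \sum_(s in maxL_set P) sel t P s * \sum_(y : bits n) mut_prob R s y * F (update P y).
Proof.
rewrite /trans.
under eq_bigr do rewrite mulr_suml.
rewrite exchange_big /=; apply: eq_bigr => s _.
under eq_bigr do rewrite -mulrA mulr_suml.
rewrite -mulr_sumr; congr (_ * _).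
rewrite exchange_big /=; apply: eq_bigr => y _.
rewrite (bigD1 (update P y)) //= eqxx mulr1 big1 ?addr0 // => Q hQ.
by rewrite eq_sym (negbTE hQ) mulr0 mul0r.
Qed.

Lemma trans_ge0 (R : realType) (n : nat) (sel : nat -> {set bits n} -> bits n -> R)
  t (P Q : {set bits n}) : (0 < n)%N -> selection_mechanism sel -> 0 <= trans sel t P Q.
Proof.
move=> n0 hsel; apply: sumr_ge0 => s hs.
have [sP _] := maxL_in hs.
have Pn0 : P != finset.set0.
  by apply/negP => /eqP P0; move: sP; rewrite P0 inE.
have [h0 _ _] := hsel t P Pn0.
apply: mulr_ge0 => //; apply: sumr_ge0 => y _.
by apply: mulr_ge0; [exact: mut_ge0 | exact: ler0n].
Qed.

Lemma drift (R : realType) (n : nat) (sel : nat -> {set bits n} -> bits n -> R)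
  t (P : {set bits n}) : (2 <= n)%N -> selection_mechanism sel -> ~~ has_pareto P ->
  \sum_Q trans sel t P Q * Vf R Q <= Vf R P - 1.
Proof.
move=> n2 hsel hnp; rewrite trans_exp.
case: (boolP (P == finset.set0)) => [/eqP P0|Pn0].
  rewrite big1; last by move=> s /maxL_in [sP _]; move: sP; rewrite P0 inE.
  rewrite /Vf /MM P0 big_set0 subn0.
  have hn : 2 <= n%:R :> R by rewrite (ler_nat R 2 n).
  have he := expR_ge1Dx (1 : R).
  nra.
have [h0 _ h1] := hsel t P Pn0.
apply: le_trans (ler_sum _ (fun s hs => ler_wpM2l (h0 s) (inner R n2 hnp hs))) _.
by rewrite -mulr_suml h1 mul1r.
Qed.

Lemma surv_hp (R : realType) (n : nat) (sel : nat -> {set bits n} -> bits n -> R)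
  t (Q : {set bits n}) : has_pareto Q -> surv sel t Q = 0.
Proof. by move=> hQ; case: t => [|t] /=; rewrite hQ mul0r. Qed.

Lemma surv_ge0 (R : realType) (n : nat) (sel : nat -> {set bits n} -> bits n -> R)
  t (Q : {set bits n}) : (0 < n)%N -> selection_mechanism sel -> 0 <= surv sel t Q.
Proof.
move=> n0 hsel; elim: t Q => [|t IH] Q /=.
  apply: mulr_ge0; first exact: ler0n.
  by apply: sumr_ge0 => s _; apply: mulr_ge0; rewrite ?invr_ge0 ler0n.
apply: mulr_ge0; first exact: ler0n.
by apply: sumr_ge0 => P _; apply: mulr_ge0 => //; exact: trans_ge0.
Qed.

Definition SS (R : realType) (n : nat) (sel : nat -> {set bits n} -> bits n -> R) t : R :=
  \sum_Q surv sel t Q * Vf R Q.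
Arguments SS {R n} sel t.

Lemma step (R : realType) (n : nat) (sel : nat -> {set bits n} -> bits n -> R) t :
  (2 <= n)%N -> selection_mechanism sel ->
  SS sel t.+1 <= SS sel t - tail_prob sel t.
Proof.
move=> n2 hsel; rewrite /SS.
apply: (@le_trans _ _ (\sum_Q (\sum_P surv sel t P * trans sel t P Q) * Vf R Q)).
  apply: ler_sum => Q _; rewrite [surv _ _.+1 _]/=.
  set X := \sum_P _.
  have X0 : 0 <= X.
    rewrite /X; apply: sumr_ge0 => P _; apply: mulr_ge0.
      by apply: surv_ge0 => //; exact: ltnW.
    by apply: trans_ge0 => //; exact: ltnW.
  case: (~~ has_pareto Q); rewrite ?mul1r ?mul0r //.
  by apply: mulr_ge0 => //; exact: Vf_ge0.
under eq_bigr do rewrite mulr_suml.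
rewrite exchange_big /= /tail_prob -sumrB; apply: ler_sum => P _.
under eq_bigr do rewrite -mulrA.
rewrite -mulr_sumr.
case: (boolP (has_pareto P)) => hp.
  by rewrite surv_hp // !mul0r subr0.
rewrite -[X in _ - X]mulr1 -mulrBr.
apply: ler_wpM2l; first by apply: surv_ge0 => //; exact: ltnW.
exact: drift.
Qed.

Lemma tele (R : realType) (n : nat) (sel : nat -> {set bits n} -> bits n -> R) N :
  (2 <= n)%N -> selection_mechanism sel ->
  \sum_(0 <= t < N) tail_prob sel t + SS sel N <= SS sel 0.
Proof.
move=> n2 hsel; elim: N => [|N IH]; first by rewrite big_nil add0r.
rewrite big_nat_recr //=; have := step N n2 hsel; lra.
Qed.

Lemma SS0 (R : realType) (n : nat) (sel : nat -> {set bits n} -> bits n -> R) :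
  SS sel 0 <= n%:R * expR 1 * n%:R.
Proof.
rewrite /SS /=.
set K : R := n%:R * expR 1 * n%:R.
have K0 : 0 <= K by rewrite /K !mulr_ge0 ?ler0n ?expR_ge0.
apply: (@le_trans _ _ (\sum_Q (\sum_(s : bits n) (2 ^ n)%:R^-1 * (Q == [set s])%:R) * K)).
  apply: ler_sum => Q _.
  set X := \sum_(s : bits n) _.
  have X0 : 0 <= X.
    by rewrite /X; apply: sumr_ge0 => s _; apply: mulr_ge0; rewrite ?invr_ge0 ler0n.
  case: (~~ has_pareto Q); rewrite ?mul1r ?mul0r.
    by apply: ler_wpM2l => //; exact: Vf_le.
  by apply: mulr_ge0.
rewrite -mulr_suml exchange_big /=.
have -> : \sum_(s : bits n) \sum_(Q : {set bits n}) (2 ^ n)%:R^-1 * (Q == [set s])%:R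
          = \sum_(s : bits n) ((2 ^ n)%:R^-1 : R).
  apply: eq_bigr => s _.
  rewrite (bigD1 [set s]) //= eqxx mulr1 big1 ?addr0 // => Q hQ.
  by rewrite (negbTE hQ) mulr0.
rewrite sumr_const card_ffun card_bool card_ord -[(_^-1) *+ _]mulr_natr mulVf ?mul1r //.
Qed.

Unset Implicit Arguments.

Theorem lemma7 (R : realType) :
  exists (C : R) (n0 : nat), forall (n : nat) (sel : nat -> {set bits n} -> bits n -> R),
    (n0 <= n)%N -> selection_mechanism sel ->
    (expected_time sel <= (C * (n ^ 2)%:R)%:E)%E.
Proof.
exists (expR 1), 2%N => n sel n2 hsel.
rewrite /expected_time.
have -> : expR 1 * (n ^ 2)%:R = n%:R * expR 1 * n%:R :> R.
  by rewrite natrX expr2; ring.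
apply: series_le.
  by move=> t; rewrite /tail_prob; apply: sumr_ge0 => Q _; apply: surv_ge0 => //; exact: ltnW.
move=> N; apply: le_trans _ (SS0 R sel).
apply: le_trans _ (@tele R n sel N n2 hsel).
rewrite lerDl /SS; apply: sumr_ge0 => Q _; apply: mulr_ge0; last exact: Vf_ge0.
by apply: surv_ge0 => //; exact: ltnW.
Qed.
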